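(* For each $n\ge1$ there is a bijection $\varphi$ from the set of plane trees with $n$ edges to $\mathfrak S_n(321)$ such that, for every such tree $T$ and $\pi=\varphi(T)$: (1) the number of young leaves of $T$ equals the number of indices $i\in\{1,\dots,n-1\}$ such that both $\pi_i$ and $\pi_{i+1}$ are weak excedances of $\pi$; (2) the number of old leaves of $T$ equals the number of weak excedances $\pi_i$ of $\pi$ that are not followed by another weak excedance (i.e. $i=n$, or $\pi_{i+1}$ is not a weak excedance).
   Context: A plane tree is a rooted tree in which the children of each vertex are linearly ordered. A leaf is a vertex with no children; the one-vertex tree has no leaves. A leaf is old if it is the leftmost child of its parent, young otherwise. $\mathfrak S_n(321)$ is the set of permutations $\pi=\pi_1\cdots\pi_n$ of $\{1,\dots,n\}$ having no indices $a<b<c$ with $\pi_a>\pi_b>\pi_c$. An entry $\pi_i$ is a weak excedance if $\pi_i\ge i$ and a deficiency if $\pi_i<i$. *)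

(* Defs.v *)
From mathcomp Require Import all_boot all_order all_fingroup.
Set Implicit Arguments. Unset Strict Implicit. Unset Printing Implicit Defensive.

Inductive ptree : Type := Node of seq ptree.

Fixpoint edges (t : ptree) : nat :=
  let: Node cs := t in
  (fix go (l : seq ptree) : nat :=
     match l with [::] => 0 | c :: l' => (edges c).+1 + go l' end) cs.

Definition is_leaf (t : ptree) : bool := if t is Node [::] then true else false.

(* old leaves: leaves that are the leftmost child of their parent
   (the root is never a leaf, since it has no parent / one-vertex tree has no leaves) *)
Fixpoint old_leaves (t : ptree) : nat :=
  let: Node cs := t in
  (if cs is c :: _ then is_leaf c else false) +
  (fix go (l : seq ptree) : nat :=
     match l with [::] => 0 | c :: l' => old_leaves c + go l' end) cs.

Fixpoint young_leaves (t : ptree) : nat :=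
  let: Node cs := t in
  count is_leaf (behead cs) +
  (fix go (l : seq ptree) : nat :=
     match l with [::] => 0 | c :: l' => young_leaves c + go l' end) cs.

(* 321-avoiding permutations of {0,...,n-1} (0-indexed version of {1..n}) *)
Definition avoids321 n (p : 'S_n) : bool :=
  [forall a : 'I_n, forall b : 'I_n, forall c : 'I_n,
     ((a < b) && (b < c)) ==> ~~ ((p c < p b) && (p b < p a))].

(* position i (0-indexed) carries a weak excedance: p i >= i
   (equivalent to pi_{i+1} >= i+1 in 1-indexed notation); false if i >= n *)
Definition wexc n (p : 'S_n) (i : nat) : bool :=
  [exists j : 'I_n, (val j == i) && (i <= p j)].

Definition wexc_pairs n (p : 'S_n) : nat :=
  count (fun i => wexc p i && wexc p i.+1) (iota 0 n.-1).

Definition wexc_ends n (p : 'S_n) : nat :=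
  count (fun i => wexc p i && ~~ wexc p i.+1) (iota 0 n).

(* Main.v *)
Require Import Defs.
From mathcomp Require Import all_boot all_order all_fingroup.
From mathcomp Require Import zify.
Set Implicit Arguments. Unset Strict Implicit. Unset Printing Implicit Defensive.

Section TreeInd.
Variables (P : ptree -> Prop) (Q : seq ptree -> Prop).
Hypotheses (H0 : Q [::]) (HC : forall c cs, P c -> Q cs -> Q (c :: cs))
  (HN : forall cs, Q cs -> P (Node cs)).
Fixpoint ptree_ind2 (t : ptree) : P t :=
  match t with Node cs => HN ((fix go (l : seq ptree) : Q l :=
     match l with [::] => H0 | c :: l' => HC (ptree_ind2 c) (go l') end) cs) end.
End TreeInd.

Lemma forest_ind (Q : seq ptree -> Prop) : Q [::] ->
  (forall cs' cs, Q cs' -> Q cs -> Q (Node cs' :: cs)) -> forall cs, Q cs.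
Proof.
move=> H0 HC cs.
pose P t := let: Node l := t in Q l.
have: P (Node cs).
  apply: (@ptree_ind2 P Q) => //.
  by move=> [l] cs1 Hl Hcs; exact: HC.
by [].
Qed.

Fixpoint word (t : ptree) : seq bool := let: Node cs := t in
  (fix fw (l : seq ptree) : seq bool := match l with [::] => [::]
     | c :: l' => fw l' ++ true :: word c ++ [:: false] end) cs.
Definition fword cs := word (Node cs).
Lemma fword_cons c cs : fword (c :: cs) = fword cs ++ true :: word c ++ [:: false].
Proof. by []. Qed.
Lemma fword_nil : fword [::] = [::]. Proof. by []. Qed.

Lemma edges_cons c cs : edges (Node (c :: cs)) = (edges c).+1 + edges (Node cs).
Proof. by []. Qed.
Lemma young_cons c cs : young_leaves (Node (c :: cs)) + count is_leaf (behead cs)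
  = count is_leaf cs + young_leaves c + young_leaves (Node cs).
Proof. rewrite /=; lia. Qed.
Lemma old_cons c cs : old_leaves (Node (c :: cs)) + (if cs is c' :: _ then is_leaf c' else false)
  = is_leaf c + old_leaves c + old_leaves (Node cs).
Proof. rewrite /=; lia. Qed.

Lemma count_fword cs : count id (fword cs) = edges (Node cs) /\ count negb (fword cs) = edges (Node cs).
Proof.
elim/forest_ind: cs => [//|cs' cs [H1 H2] [H3 H4]].
rewrite fword_cons edges_cons -[word (Node cs')]/(fword cs') !count_cat.
rewrite /= !count_cat /= in H1 H2 H3 H4 *; lia.
Qed.

Fixpoint ok (k : nat) (w : seq bool) : bool :=
  match w with [::] => true | true :: w' => ok k.+1 w' | false :: w' => (0 < k) && ok k.-1 w' end.

Lemma ok_fword cs : forall k y, ok k (fword cs ++ y) = ok k y.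
Proof.
elim/forest_ind: cs => [//|cs' cs H1 H2] k y.
rewrite fword_cons -catA H2 cat_cons -catA -[word (Node cs')]/(fword cs').
change (ok k.+1 (fword cs' ++ [:: false] ++ y) = ok k y).
by rewrite H1.
Qed.

Fixpoint fl (f : bool) (w : seq bool) : seq bool :=
  match w with [::] => [::] | true :: w' => fl true w' | false :: w' => f :: fl false w' end.

Lemma fl_cat f x y : fl f (x ++ y) = fl f x ++ fl (last f x) y.
Proof. by elim: x f => [|[] x IH] f //=; rewrite IH. Qed.

Lemma fword_start cs : cs <> [::] -> exists w', fword cs = true :: w'.
Proof.
elim: cs => [//|c cs IH] _; rewrite fword_cons.
case: cs IH => [|c' cs] IH; first by eexists.
have /IH [w' ->] : c' :: cs <> [::] by [].
by eexists.
Qed.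

Lemma fl_fword f cs : fl f (fword cs) = fl true (fword cs).
Proof. case: cs => [//|c cs]; have /fword_start [w' ->] : c :: cs <> [::] by []. by []. Qed.

Definition FF cs := fl true (fword cs).
Definition B c := fl true (word c ++ [:: false]).

Lemma FF_cons c cs : FF (c :: cs) = FF cs ++ B c.
Proof. by rewrite /FF fword_cons fl_cat. Qed.

Lemma last_fword cs : last true (fword cs) = is_leaf (Node cs).
Proof. case: cs => [//|c cs]; by rewrite fword_cons last_cat /= last_cat. Qed.

Lemma B_node cs : B (Node cs) = FF cs ++ [:: is_leaf (Node cs)].
Proof.
by rewrite /B -[word (Node cs)]/(fword cs) fl_cat last_fword.
Qed.

Lemma FF_nil : FF [::] = [::]. Proof. by []. Qed.

Lemma head_B c : head false (B c) = true.
Proof.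
pose Q cs := head false (B (Node cs)) = true /\ (cs <> [::] -> head false (FF cs) = true).
case: c => cs; suff: Q cs by case.
elim/forest_ind: cs => [|cs' cs [H1 _] [H3 H4]]; first by [].
have H5 : head false (FF (Node cs' :: cs)) = true.
  rewrite FF_cons; case E: (FF cs) => [|x l] //=.
  have: cs <> [::] by move=> E'; rewrite E' in E.
  by move/H4; rewrite E.
split=> //; rewrite B_node; move: H5; by case: (FF (Node cs' :: cs)).
Qed.

Lemma last_B c : last false (B c) = is_leaf c.
Proof. by case: c => cs; rewrite B_node last_cat. Qed.

Lemma last_FF cs : last false (FF cs) = (if cs is c :: _ then is_leaf c else false).
Proof.
case: cs => [//|c cs]; rewrite FF_cons last_cat.
case: c => l; rewrite B_node last_cat //.
Qed.

Fixpoint pairsR (l : seq bool) : nat :=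
  match l with [::] => 0 | a :: l' => (a && head false l') + pairsR l' end.
Fixpoint endsR (l : seq bool) : nat :=
  match l with [::] => 0 | a :: l' => (a && ~~ head false l') + endsR l' end.

Lemma pairsR_cat l1 l2 : pairsR (l1 ++ l2) = pairsR l1 + pairsR l2 + (last false l1 && head false l2).
Proof.
elim: l1 => [|a l1 IH] /=; first by rewrite addn0.
case: l1 IH => [|b l1] IH /=; [by case: a => /=; lia | move: IH => /=; lia].
Qed.

Lemma endsR_cat l1 l2 : endsR (l1 ++ l2) + (last false l1 && head false l2) = endsR l1 + endsR l2.
Proof.
elim: l1 => [|a l1 IH] /=; first by rewrite addn0.
case: l1 IH => [|b l1] IH /=.
  by case: a; case: l2 {IH} => [|[] l2] /=; lia.
move: IH => /=; lia.
Qed.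

Lemma stats_FF cs : pairsR (FF cs) = young_leaves (Node cs) /\ endsR (FF cs) = old_leaves (Node cs).
Proof.
elim/forest_ind: cs => [//|cs' cs [H1 H2] [H3 H4]].
have PB : pairsR (B (Node cs')) = young_leaves (Node cs').
  rewrite B_node pairsR_cat /= H1 last_FF; case: cs' {H1 H2} => [|c l] //=; lia.
have EB : endsR (B (Node cs')) = is_leaf (Node cs') + old_leaves (Node cs').
  have := endsR_cat (FF cs') [:: is_leaf (Node cs')].
  rewrite -B_node H2 last_FF /=; case: cs' {H1 H2 PB} => [|c l] /=; lia.
rewrite FF_cons; split.
  rewrite pairsR_cat PB head_B last_FF H3.
  have := young_cons (Node cs') cs; case: cs {H3 H4} => [|c l] /=; lia.
have := endsR_cat (FF cs) (B (Node cs')).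
rewrite head_B last_FF H4 EB.
have := old_cons (Node cs') cs; case: cs {H3 H4} => [|c l] /=; lia.
Qed.
Fixpoint run (st : seq (seq ptree)) (w : seq bool) : seq (seq ptree) :=
  match w with [::] => st | true :: w' => run ([::] :: st) w'
  | false :: w' => match st with f0 :: f1 :: st' => run ((Node f0 :: f1) :: st') w'
                   | _ => run st w' end end.

Fixpoint g (st : seq (seq ptree)) : seq bool :=
  match st with [::] => [::] | f :: st' =>
    match st' with [::] => fword f | _ => g st' ++ true :: fword f end end.

Lemma run_fword cs : forall f st y, run (f :: st) (fword cs ++ y) = run ((cs ++ f) :: st) y.
Proof.
elim/forest_ind: cs => [//|cs' cs H1 H2] f st y.
rewrite fword_cons -catA H2 cat_cons -catA -[word (Node cs')]/(fword cs').
change (run ([::] :: (cs ++ f) :: st) (fword cs' ++ [:: false] ++ y) =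
  run (((Node cs' :: cs) ++ f) :: st) y).
by rewrite H1 cats0.
Qed.

Lemma fword_inj cs1 cs2 : fword cs1 = fword cs2 -> cs1 = cs2.
Proof.
move=> E; have := run_fword cs1 [::] [::] [::]; rewrite E run_fword !cats0.
by case.
Qed.

Lemma run_g w : forall st, st <> [::] -> ok (size st).-1 w ->
  g (run st w) = g st ++ w /\ size (run st w) + count negb w = size st + count id w.
Proof.
elim: w => [|[] w IH] st Hst /=; first by rewrite cats0 addn0.
  move=> Hok; have [] := IH ([::] :: st) => //.
    by case: st Hst Hok.
  move=> -> ->; split; last by rewrite /=; lia.
  by case: st Hst Hok => // f st _ _; rewrite -catA.
case: st Hst => [//|f0 [|f1 st]] _ //= Hok.
have [] := IH ((Node f0 :: f1) :: st) => // -> E; split; last by move: E => /=; lia.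
case: st {Hok E} => [|f st] /=; rewrite fword_cons -[word (Node f0)]/(fword f0) -!catA !cat_cons -!catA ?cat_cons -?catA; reflexivity.
Qed.

Lemma dyck_fword w : ok 0 w -> count id w = count negb w -> exists cs, fword cs = w.
Proof.
move=> Hok Hc; have [] := @run_g w [:: [::]] => // H1 H2.
move: H1 H2; case: (run [:: [::]] w) => [|f [|f' st]] /=; try lia.
by move=> H _; exists f.
Qed.
Definition mex (s : seq nat) : nat := find (fun k => k \notin s) (iota 0 (size s).+1).

Lemma mex_has s : has (fun k => k \notin s) (iota 0 (size s).+1).
Proof.
case: (boolP (has _ _)) => // /hasPn H.
have : {subset iota 0 (size s).+1 <= s} by move=> x /H; rewrite negbK.
by move/(uniq_leq_size (iota_uniq 0 _)); rewrite size_iota ltnn.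
Qed.

Lemma mex_le s : mex s <= size s.
Proof. by have := mex_has s; rewrite has_find size_iota ltnS. Qed.

Lemma mex_notin s : mex s \notin s.
Proof.
have := nth_find 0 (mex_has s); rewrite nth_iota //.
by rewrite -/(mex s) ltnS mex_le.
Qed.

Lemma mex_min s k : k < mex s -> k \in s.
Proof.
move=> Hk; have := before_find 0 Hk; rewrite nth_iota; first by move/negbFE.
by rewrite ltnS (leq_trans (ltnW Hk)) // mex_le.
Qed.

Lemma mex_eq s x : x \notin s -> (forall y, y < x -> y \in s) -> mex s = x.
Proof.
move=> Hx Hy; apply/eqP; rewrite eqn_leq; apply/andP; split.
  by rewrite leqNgt; apply/negP => /mex_min; rewrite (negbTE Hx).
by rewrite leqNgt; apply/negP => /Hy; rewrite (negbTE (mex_notin s)).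
Qed.

Definition mx (s : seq nat) : nat := foldr (fun x m => maxn x.+1 m) 0 s.

Lemma mx_cons y s : mx (y :: s) = maxn y.+1 (mx s). Proof. by []. Qed.

Lemma mx_rcons s x : mx (rcons s x) = maxn (mx s) x.+1.
Proof. elim: s => [|y s IH]; first by rewrite /= maxn0 max0n. rewrite rcons_cons !mx_cons IH; lia. Qed.

Lemma in_mx s x : x \in s -> x < mx s.
Proof. elim: s => [//|y s IH]; rewrite in_cons mx_cons => /orP[/eqP->|/IH]; lia. Qed.

Lemma mx_bound s b : all (fun x => x < b) s -> mx s <= b.
Proof. elim: s => [//|y s IH]; rewrite mx_cons => /andP[H1 /IH]; lia. Qed.

Lemma mx_mem s : 0 < mx s -> (mx s).-1 \in s.
Proof.
elim: s => [//|y s IH]; rewrite mx_cons => _; rewrite in_cons.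
case: (leqP y.+1 (mx s)) => H.
  by rewrite IH ?orbT //; lia.
by rewrite eqxx.
Qed.

Lemma uniq_mx s : uniq s -> size s <= mx s.
Proof.
move=> Hu; have: {subset s <= iota 0 (mx s)} by move=> x /in_mx; rewrite mem_iota.
by move/(uniq_leq_size Hu); rewrite size_iota.
Qed.

Lemma full_mem l y : uniq l -> all (fun z => z < size l) l -> y < size l -> y \in l.
Proof.
move=> Hu Ha Hy.
have Hs : {subset l <= iota 0 (size l)} by move=> x Hx; rewrite mem_iota /= (allP Ha x Hx).
have [|_ E] := uniq_min_size Hu Hs; first by rewrite size_iota.
by rewrite E mem_iota.
Qed.

Fixpoint gen (M : nat) (f : bool) (pre : seq nat) (w : seq bool) : seq nat :=
  match w with [::] => [::]
  | true :: w' => gen M.+1 true pre w'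
  | false :: w' => let v := if f then M.-1 else mex pre in v :: gen M false (rcons pre v) w'
  end.

Fixpoint wp (M : nat) (s : seq nat) : seq bool :=
  match s with [::] => [::]
  | x :: s' => nseq (x.+1 - M) true ++ false :: wp (maxn M x.+1) s' end.

Fixpoint wf (pre : seq nat) (s : seq nat) : seq bool :=
  match s with [::] => [::] | v :: s' => (size pre <= v) :: wf (rcons pre v) s' end.

Fixpoint qall (pre s : seq nat) : bool :=
  match s with [::] => true
  | v :: s' => (all (fun x => x < v) pre || all (fun y => y \in pre) (iota 0 v)) && qall (rcons pre v) s'
  end.

Lemma size_gen w : forall M f pre, size (gen M f pre w) = count negb w.
Proof. by elim: w => [|[] w IH] M f pre //=; rewrite IH. Qed.

Lemma nseq_cat_S k (w : seq bool) : nseq k.+1 true ++ w = nseq k true ++ true :: w.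
Proof. by elim: k => //= k ->. Qed.

Lemma gen_props w : forall M f (pre : seq nat), size pre <= M -> ok (M - size pre) w ->
  M + count id w = size pre + count negb w -> uniq pre ->
  (if f then mx pre < M else mx pre == M) ->
  [/\ uniq (pre ++ gen M f pre w), all (fun x => x < M + count id w) (gen M f pre w),
      qall pre (gen M f pre w), wf pre (gen M f pre w) = fl f w &
      wp (mx pre) (gen M f pre w) = nseq (M - mx pre) true ++ w].
Proof.
elim: w => [|b w IH] M f pre Hs Hok Hbal Hu Hf.
  rewrite /= !cats0; split=> //.
  case: f Hf => Hf; last by rewrite (eqP Hf) subnn.
  have := uniq_mx Hu; move: Hbal; rewrite /=; lia.
have Hmx : mx pre <= M by case: f Hf => [/ltnW|/eqP ->].
case: b Hok Hbal => /= Hok Hbal.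
  have [] := IH M.+1 true pre => //; first by lia.
  - by rewrite subSn.
  - by move: Hbal; rewrite !addSn !add0n addnS => ->.
  move=> H1 H2 H3 H4 H5; split=> //.
  - by rewrite add1n -addSnnS.
  - by rewrite H5 subSn // nseq_cat_S.
move/andP: Hok => [Hpos Hok].
move Ev: (if f then M.-1 else mex pre) => v.
have Hvlt : v < M.
  case: f Hf Ev => _ <-; first by lia.
  by have := mex_le pre; lia.
have Hvn : v \notin pre.
  case: f Hf Ev => Hf <-; last exact: mex_notin.
  by apply/negP => /in_mx; lia.
have Hmx' : mx (rcons pre v) = M.
  rewrite mx_rcons; case: f Hf Ev Hvlt => Hf <- Hvlt; first by lia.
  by rewrite (eqP Hf); lia.
have [] := IH M false (rcons pre v).
- by rewrite size_rcons; lia.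
- by rewrite size_rcons subnS.
- by rewrite size_rcons; lia.
- by rewrite rcons_uniq Hvn Hu.
- by rewrite Hmx'.
rewrite Hmx' subnn /= => H1 H2 H3 H4 H5.
split.
- by rewrite -cat_rcons.
- by rewrite add0n H2 andbT ltn_addr.
- rewrite H3 andbT; case: f Hf Ev {Hvlt Hvn Hmx' H1 H2 H3 H4 H5} => Hf <- /=.
    by apply/orP; left; apply/allP => x /in_mx; lia.
  apply/orP; right; apply/allP => y; rewrite mem_iota => /andP[_ Hy].
  exact: mex_min.
- rewrite H4; congr (_ :: _).
  case: f Hf Ev {H1 H2 H3 H4 H5 Hmx' Hvn Hvlt} => Hf <-; first by lia.
  apply/negbTE; rewrite -ltnNge.
  have := mex_le pre; rewrite leq_eqVlt => /orP[/eqP E|//].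
  have Hsub : {subset iota 0 (size pre) <= pre}.
    by move=> y; rewrite mem_iota /= -E; apply: mex_min.
  have [|_ E2] := uniq_min_size (iota_uniq 0 _) Hsub; first by rewrite size_iota.
  have : mx pre <= size pre.
    by apply: mx_bound; apply/allP => x; rewrite -E2 mem_iota.
  by rewrite (eqP Hf); lia.
- rewrite -mx_rcons Hmx' H5; congr (nseq _ _ ++ _).
  case: f Hf Ev {H1 H2 H3 H4 H5 Hmx' Hvn} Hvlt => Hf <- Hvlt; first by lia.
  by rewrite (eqP Hf); lia.
Qed.
Definition avoid (s : seq nat) := forall a b c, a < b -> b < c -> c < size s ->
  ~~ ((nth 0 s c < nth 0 s b) && (nth 0 s b < nth 0 s a)).

Lemma gen_nseq k : forall M f (pre : seq nat) w,
  gen M f pre (nseq k true ++ w) = gen (M + k) (f || (0 < k)) pre w.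
Proof.
elim: k => [|k IH] M f pre w; first by rewrite addn0 orbF.
by rewrite /= IH addSnnS orbT.
Qed.

Lemma wp_cons M x s : wp M (x :: s) = nseq (x.+1 - M) true ++ false :: wp (maxn M x.+1) s.
Proof. by []. Qed.

Lemma gen_wp s : forall pre : seq nat, uniq (pre ++ s) ->
  all (fun z => z < size (pre ++ s)) (pre ++ s) -> avoid (pre ++ s) ->
  gen (mx pre) false pre (wp (mx pre) s) = s.
Proof.
elim: s => [|x s IH] pre Hu Ha Hav; first by [].
have Hu' : uniq (rcons pre x ++ s) by rewrite cat_rcons.
have Ha' : all (fun z => z < size (rcons pre x ++ s)) (rcons pre x ++ s) by rewrite cat_rcons.
have Hav' : avoid (rcons pre x ++ s) by rewrite cat_rcons.
have Hxn : x \notin pre.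
  by move: Hu'; rewrite cat_uniq rcons_uniq => /andP[/andP[]].
rewrite wp_cons gen_nseq.
case: (ltnP (mx pre) x.+1) => H.
  have -> : mx pre + (x.+1 - mx pre) = x.+1 by lia.
  have Hp : 0 < x.+1 - mx pre by lia.
  rewrite Hp /=; congr (_ :: _).
  have := IH (rcons pre x) Hu' Ha' Hav'; rewrite mx_rcons.
  by rewrite (_ : maxn (mx pre) x.+1 = x.+1) //; lia.
have -> : x.+1 - mx pre = 0 by lia.
rewrite addn0 /=.
have Hmex : mex pre = x.
  apply: mex_eq => // y Hyx.
  have Hx : x < size (pre ++ x :: s) by rewrite (allP Ha) // mem_cat in_cons eqxx orbT.
  have : y \in pre ++ x :: s.
    by apply: full_mem => //; apply: ltn_trans Hyx Hx.
  rewrite mem_cat in_cons => /orP[//|/orP[/eqP E|Hys]]; first by lia.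
  exfalso.
  have Hm : (mx pre).-1 \in pre by apply: mx_mem; lia.
  have Hxm : x != (mx pre).-1 by apply: contraNneq Hxn => ->.
  have Hi : index y s < size s by rewrite index_mem.
  have Hab : index (mx pre).-1 pre < size pre by rewrite index_mem.
  have Hbc : size pre < size pre + 1 + index y s by rewrite addn1 ltnS leq_addr.
  have Hc : size pre + 1 + index y s < size (pre ++ x :: s).
    by rewrite size_cat /= -addnA ltn_add2l add1n ltnS.
  have := Hav _ _ _ Hab Hbc Hc.
  have -> : nth 0 (pre ++ x :: s) (index (mx pre).-1 pre) = (mx pre).-1.
    by rewrite nth_cat Hab nth_index.
  have -> : nth 0 (pre ++ x :: s) (size pre) = x by rewrite nth_cat ltnn subnn.
  have -> : nth 0 (pre ++ x :: s) (size pre + 1 + index y s) = y.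
    rewrite nth_cat ltnNge ltnW //= -addnA addKn add1n /=.
    by rewrite nth_index.
  rewrite Hyx /=.
  have : x < (mx pre).-1 by move: Hxm; rewrite neq_ltn => /orP[//|]; lia.
  by move=> ->.
rewrite Hmex; congr (_ :: _).
have := IH (rcons pre x) Hu' Ha' Hav'; rewrite mx_rcons.
by rewrite (_ : maxn (mx pre) x.+1 = mx pre) //; lia.
Qed.

Lemma ok_nseq j : forall k w, ok k (nseq j true ++ w) = ok (k + j) w.
Proof. elim: j => [|j IH] k w; first by rewrite addn0. by rewrite /= IH addSnnS. Qed.

Lemma wp_ok s : forall pre : seq nat, uniq (pre ++ s) -> ok (mx pre - size pre) (wp (mx pre) s).
Proof.
elim: s => [|x s IH] pre Hu; first by [].
have Hu' : uniq (rcons pre x ++ s) by rewrite cat_rcons.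
have Hr : uniq (rcons pre x) by move: Hu'; rewrite cat_uniq => /andP[].
have H1 : (size pre).+1 <= maxn (mx pre) x.+1.
  by have := uniq_mx Hr; rewrite mx_rcons size_rcons.
have H0 : size pre <= mx pre by apply: uniq_mx; move: Hr; rewrite rcons_uniq => /andP[].
have := IH _ Hu'; rewrite mx_rcons size_rcons => H2.
rewrite wp_cons ok_nseq /=.
rewrite (_ : mx pre - size pre + (x.+1 - mx pre) = (maxn (mx pre) x.+1 - (size pre).+1).+1) //.
lia.
Qed.

Lemma count_wp s : forall M, M + count id (wp M s) = maxn M (mx s) /\ count negb (wp M s) = size s.
Proof.
elim: s => [|x s IH] M; first by rewrite /= addn0 maxn0.
rewrite mx_cons wp_cons !count_cat !count_nseq /= -/(mx s).
have [H1 H2] := IH (maxn M x.+1).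
split; last by rewrite H2; lia.
lia.
Qed.

Lemma mx_full s : uniq s -> all (fun z => z < size s) s -> 0 < size s -> mx s = size s.
Proof.
move=> Hu Ha Hs; apply/eqP; rewrite eqn_leq mx_bound //=.
have Hl : (size s).-1 < size s by rewrite prednK.
have := in_mx (full_mem Hu Ha Hl); by rewrite prednK.
Qed.
Lemma qall_nth s : forall (pre : seq nat) i, qall pre s -> i < size s ->
  all (fun x => x < nth 0 s i) (pre ++ take i s) ||
  all (fun y => y \in pre ++ take i s) (iota 0 (nth 0 s i)).
Proof.
elim: s => [//|v s IH] pre [|i] /= /andP[H1 H2] Hi; first by rewrite cats0.
by have := IH (rcons pre v) i H2 Hi; rewrite cat_rcons.
Qed.

Lemma qall_avoid s : uniq s -> qall [::] s -> avoid s.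
Proof.
move=> Hu Hq a b c Hab Hbc Hc; apply/negP => /andP[Hcb Hba].
have Hb : b < size s by apply: ltn_trans Hbc Hc.
have := qall_nth Hq Hb; rewrite /= => /orP[/allP H|/allP H].
  have : nth 0 s a \in take b s.
    have Ha : a < size (take b s) by rewrite size_take Hb.
    by rewrite -(nth_take 0 Hab) mem_nth.
  by move/H; rewrite ltnNge ltnW.
have : nth 0 s c \in take b s by apply: H; rewrite mem_iota.
have : nth 0 s c \in drop b s.
  have -> : nth 0 s c = nth 0 (drop b s) (c - b) by rewrite nth_drop subnKC // ltnW.
  by rewrite mem_nth // size_drop ltn_sub2r.
move: Hu; rewrite -{1}(cat_take_drop b s) cat_uniq => /and3P[_ /hasPn Hd _] Hdr Htk.
by have := Hd _ Hdr; rewrite Htk.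
Qed.

Lemma nth_wf s : forall (pre : seq nat) i, nth false (wf pre s) i = (i < size s) && (size pre + i <= nth 0 s i).
Proof.
elim: s => [|v s IH] pre [|i] //=; first by rewrite addn0.
by rewrite IH size_rcons addSnnS.
Qed.

Lemma size_wf s : forall (pre : seq nat), size (wf pre s) = size s.
Proof. by elim: s => [|v s IH] pre //=; rewrite IH. Qed.

Lemma pairs_iota F : pairsR F = count (fun i => nth false F i && nth false F i.+1) (iota 0 (size F).-1).
Proof.
elim: F => [//|a l IH]; case: l IH => [|b l] IH; first by case: a.
rewrite /= in IH *; rewrite IH -[1]/(1 + 0) iotaDl count_map; congr (_ + _).
Qed.

Lemma ends_iota F : endsR F = count (fun i => nth false F i && ~~ nth false F i.+1) (iota 0 (size F)).
Proof.
elim: F => [//|a l IH]; rewrite /= IH -[1]/(1 + 0) iotaDl count_map; congr (_ + _).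
Qed.

Section Perm.
Variable m : nat.

Definition ps (p : 'S_m.+1) : seq nat := mkseq (fun i => val (p (inord i))) m.+1.

Lemma size_ps p : size (ps p) = m.+1. Proof. exact: size_mkseq. Qed.

Lemma nth_ps p i : i < m.+1 -> nth 0 (ps p) i = p (inord i).
Proof. by move=> Hi; rewrite nth_mkseq. Qed.

Lemma nth_ps' p (i : 'I_m.+1) : nth 0 (ps p) i = p i.
Proof. by rewrite nth_ps // inord_val. Qed.

Lemma ps_uniq p : uniq (ps p).
Proof.
apply/(uniqP 0) => i j; rewrite !inE size_ps => Hi Hj.
rewrite !nth_ps // => /val_inj /perm_inj /(congr1 (@nat_of_ord _)).
by rewrite !inordK.
Qed.

Lemma ps_all p : all (fun x => x < m.+1) (ps p).
Proof. apply/allP => x; rewrite /ps /mkseq => /mapP[i _ ->]; exact: ltn_ord. Qed.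

Lemma ps_inj p1 p2 : ps p1 = ps p2 -> p1 = p2.
Proof.
move=> E; apply/permP => i; apply: val_inj.
by have := congr1 (fun s => nth 0 s i) E; rewrite /= !nth_ps'.
Qed.

Lemma avoid_ps p : avoid (ps p) -> avoids321 p.
Proof.
move=> Hav; apply/forallP => a; apply/forallP => b; apply/forallP => c.
apply/implyP => /andP[Hab Hbc].
by have := Hav a b c Hab Hbc; rewrite size_ps !nth_ps' => ->.
Qed.

Lemma ps_avoid p : avoids321 p -> avoid (ps p).
Proof.
move=> H a b c Hab Hbc; rewrite size_ps => Hc.
have Hb : b < m.+1 by apply: ltn_trans Hbc Hc.
have Ha : a < m.+1 by apply: ltn_trans Hab Hb.
have := implyP (forallP (forallP (forallP H (inord a)) (inord b)) (inord c)).
rewrite !inordK // Hab Hbc => /(_ isT).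
by rewrite !nth_ps.
Qed.

Lemma wexc_ps p i : wexc p i = (i < m.+1) && (i <= nth 0 (ps p) i).
Proof.
apply/existsP/andP => [[j /andP[/eqP <- H]]|[Hi H]].
  by rewrite nth_ps' ltn_ord.
by exists (inord i); rewrite -nth_ps // H andbT; apply/eqP; apply: inordK.
Qed.

Lemma exists_ps (s : seq nat) : uniq s -> size s = m.+1 -> all (fun x => x < m.+1) s ->
  exists p : 'S_m.+1, ps p = s.
Proof.
move=> Hu Hs Ha.
have Hlt : forall i : 'I_m.+1, nth 0 s i < m.+1.
  by move=> i; apply: (allP Ha); rewrite mem_nth // Hs.
pose f (i : 'I_m.+1) : 'I_m.+1 := inord (nth 0 s i).
have finj : injective f.
  move=> i j /(congr1 (@nat_of_ord _)); rewrite /f !inordK // => E.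
  by apply: val_inj; apply/eqP; rewrite -(@nth_uniq _ 0 s) ?Hs ?E ?eqxx ?ltn_ord.
exists (perm finj); apply: (@eq_from_nth _ 0); rewrite size_ps ?Hs // => i Hi.
by rewrite nth_ps // permE /f inordK ?inordK // -(inordK Hi).
Qed.

End Perm.

Theorem mainTheorem10 (n : nat) (hn : 1 <= n) :
  exists phi : ptree -> 'S_n,
    (forall t, edges t = n -> avoids321 (phi t)) /\
    (forall t1 t2, edges t1 = n -> edges t2 = n -> phi t1 = phi t2 -> t1 = t2) /\
    (forall p : 'S_n, avoids321 p -> exists t, edges t = n /\ phi t = p) /\
    (forall t, edges t = n ->
       young_leaves t = wexc_pairs (phi t) /\ old_leaves t = wexc_ends (phi t)).
Proof.
case: n hn => // m _.
pose G t := gen 0 false [::] (word t).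
pose phi t : 'S_m.+1 := if [pick p : 'S_m.+1 | ps p == G t] is Some p then p else 1%g.
have HG : forall cs, edges (Node cs) = m.+1 ->
   [/\ uniq (G (Node cs)), size (G (Node cs)) = m.+1, all (fun x => x < m.+1) (G (Node cs)),
       qall [::] (G (Node cs)) &
       wf [::] (G (Node cs)) = FF cs /\ wp 0 (G (Node cs)) = fword cs].
  move=> cs He; have [Hc1 Hc2] := count_fword cs; rewrite He in Hc1 Hc2.
  have Hok : ok 0 (fword cs) by have := ok_fword cs 0 [::]; rewrite cats0.
  have [] := @gen_props (fword cs) 0 false [::] => //; first by rewrite Hc1 Hc2.
  rewrite Hc1 /= => H1 H2 H3 H4 H5; split=> //.
  - by rewrite /G size_gen Hc2.
  - by rewrite H4 fl_fword.
have Hphi : forall cs, edges (Node cs) = m.+1 -> ps (phi (Node cs)) = G (Node cs).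
  move=> cs He; have [Hu Hs Ha _ _] := HG cs He.
  rewrite /phi; case: pickP => [p /eqP //|H].
  by have [p Hp] := exists_ps Hu Hs Ha; have := H p; rewrite Hp eqxx.
exists phi; split.
  case=> cs He; apply: avoid_ps; rewrite Hphi //.
  by have [Hu _ _ Hq _] := HG cs He; apply: qall_avoid.
split.
  case=> cs1; case=> cs2 He1 He2 E.
  have := congr1 (@ps m) E; rewrite !Hphi // => E2.
  have [_ _ _ _ [_ W1]] := HG cs1 He1; have [_ _ _ _ [_ W2]] := HG cs2 He2.
  have : fword cs1 = fword cs2 by rewrite -W1 -W2 E2.
  by move/fword_inj => ->.
split.
  move=> p Hp; set s := ps p.
  have Hu := ps_uniq p; have Hs := size_ps p; have Ha := ps_all p; have Hav := ps_avoid Hp.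
  have Hmx : mx s = m.+1 by rewrite mx_full // Hs.
  have Hok : ok 0 (wp 0 s) by apply: (@wp_ok s [::]).
  have [Hc1 Hc2] := count_wp s 0.
  have [cs Hcs] : exists cs, fword cs = wp 0 s.
    apply: dyck_fword => //; move: Hc1; rewrite add0n Hc2 Hmx Hs => -> //.
  have He : edges (Node cs) = m.+1.
    by have [E1 _] := count_fword cs; rewrite -E1 Hcs; move: Hc1; rewrite add0n max0n Hmx.
  exists (Node cs); split=> //; apply: ps_inj; rewrite Hphi //.
  rewrite /G -[word (Node cs)]/(fword cs) Hcs.
  by have := @gen_wp s [::] Hu; rewrite Hs; apply.
case=> cs He.
have [_ Hs _ _ [Hwf _]] := HG cs He.
have [Hy Ho] := stats_FF cs.
have Hsz : size (FF cs) = m.+1 by rewrite -Hwf size_wf.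
have Hw : forall i, wexc (phi (Node cs)) i = nth false (FF cs) i.
  by move=> i; rewrite wexc_ps Hphi // -Hwf nth_wf Hs.
split.
  rewrite -Hy pairs_iota Hsz /wexc_pairs /=.
  by apply: eq_count => i; rewrite !Hw.
rewrite -Ho ends_iota Hsz /wexc_ends.
by apply: eq_count => i; rewrite !Hw.
Qed.
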